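(* Let $k \ge 1$ be an integer and let $G$ be a $k$-degenerate graph with maximum degree $\Delta$, where $k \le \Delta$. Then $\chi_s'(G) \le (4k-2)\Delta - 2k^2 + 1$.
   Context: All graphs are finite and simple. A graph is $k$-degenerate if every subgraph of it has a vertex of degree at most $k$. A strong edge coloring of $G$ is an assignment of colors to the edges of $G$ such that every path with three edges receives three distinct colors; equivalently, any two distinct edges that share an endpoint, or that are both incident with a common edge (i.e., an endpoint of one is adjacent to an endpoint of the other), receive different colors. The strong chromatic index $\chi_s'(G)$ is the minimum number of colors in a strong edge coloring of $G$. *)

(* Defs.v *)
From mathcomp Require Import all_boot.
Set Implicit Arguments. Unset Strict Implicit. Unset Printing Implicit Defensive.

Definition simple_graph (V : finType) (e : rel V) : Prop :=
  symmetric e /\ irreflexive e.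

Definition deg_in (V : finType) (S : {set V}) (f : rel V) (v : V) : nat :=
  #|[set u in S | f v u]|.

Definition deg (V : finType) (e : rel V) (v : V) : nat := #|[set u | e v u]|.

Definition max_deg (V : finType) (e : rel V) : nat := \max_(v : V) deg e v.

(* G is k-degenerate: every (nonempty) subgraph H = (S, f) of G, with S a vertex
   subset and f a symmetric sub-relation of e (edges of H have both ends in S),
   has a vertex of degree at most k in H. *)
Definition degenerate (V : finType) (e : rel V) (k : nat) : Prop :=
  forall (S : {set V}) (f : rel V),
    S != set0 ->
    symmetric f ->
    (forall x y, f x y -> e x y) ->
    exists2 v, v \in S & deg_in S f v <= k.

Definition is_edge (V : finType) (e : rel V) (E : {set V}) : bool :=
  [exists x, exists y, e x y && (E == [set x; y])].

Definition conflict (V : finType) (e : rel V) (E F : {set V}) : bool :=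
  [exists x in E, exists y in F, (x == y) || e x y].

Definition strong_edge_coloring (V : finType) (e : rel V) (N : nat)
    (c : {set V} -> 'I_N) : Prop :=
  forall E F, is_edge e E -> is_edge e F -> E != F -> conflict e E F ->
    c E != c F.

Definition strong_chi_le (V : finType) (e : rel V) (N : nat) : Prop :=
  exists c : {set V} -> 'I_N, strong_edge_coloring e c.

(* Main.v *)
Require Import Defs.
From mathcomp Require Import all_boot zify.
Set Implicit Arguments. Unset Strict Implicit. Unset Printing Implicit Defensive.

Lemma order_exists (V : finType) (e : rel V) (k : nat) :
  symmetric e -> degenerate e k ->
  forall S : {set V}, exists r : V -> nat,
    [/\ {in S &, injective r}, {in S, forall v, r v < #|S|} &
        {in S, forall v, #|[set u in S | e v u & r u < r v]| <= k}].
Proof.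
move=> esym dg S; move Hn: #|S| => n; elim: n S Hn => [|n IH] S Hn.
  exists (fun _ => 0); move/eqP: Hn; rewrite cards_eq0 => /eqP ->.
  by split=> x; rewrite in_set0.
have S0 : S != set0 by rewrite -card_gt0 Hn.
have [v vS dv] := dg S e S0 esym (fun x y h => h).
have Hn' : #|S :\ v| = n by move: (cardsD1 v S); rewrite vS Hn; case.
have [r' [ri rb rd]] := IH _ Hn'.
have inS' : forall x, x \in S -> x != v -> x \in S :\ v.
  by move=> x xS xv; rewrite in_setD1 xv.
exists (fun x => if x == v then n else r' x); split.
- move=> x y xS yS /=.
  case: (eqVneq x v) => [->|xv]; case: (eqVneq y v) => [->|yv] //.
  + by move=> h; move: (rb _ (inS' _ yS yv)); rewrite -h ltnn.
  + by move=> h; move: (rb _ (inS' _ xS xv)); rewrite h ltnn.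
  + by apply: ri; apply: inS'.
- move=> x xS /=; case: (eqVneq x v) => [_|xv]; first by [].

  by rewrite ltnS ltnW // rb // inS'.
- move=> x xS /=; case: (eqVneq x v) => [->|xv].
    apply: leq_trans dv; rewrite /deg_in; apply: subset_leq_card.
    by apply/subsetP=> u; rewrite !inE => /andP[-> /andP[->]].
  have xS' := inS' _ xS xv.
  apply: leq_trans (rd _ xS'); apply: subset_leq_card.
  apply/subsetP=> u; rewrite !inE => /andP[uS /andP[exu]].
  case: (eqVneq u v) => [->|uv]; last by rewrite uS exu.
  by move=> h; move: (rb _ xS'); rewrite ltnNge ltnW.
Qed.

Lemma greedy (T : finType) (P : pred T) (conf : rel T) (key : T -> nat) (N : nat) :
  0 < N -> symmetric conf -> {in P &, injective key} ->
  (forall E, P E -> #|[set F | P F && (F != E) && conf E F && (key F < key E)]| < N) ->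
  exists c : T -> 'I_N, forall E F, P E -> P F -> E != F -> conf E F -> c E != c F.
Proof.
move=> N0 csym kinj hb.
suff H : forall A : {set T}, {subset A <= P} -> exists c : T -> 'I_N,
    forall E F, E \in A -> F \in A -> E != F -> conf E F -> c E != c F.
  have [c hc] : exists c : T -> 'I_N, forall E F, E \in [set x | P x] -> F \in [set x | P x] -> E != F -> conf E F -> c E != c F.
    by apply: H => x; rewrite inE.
  by exists c => E F PE PF; apply: hc; rewrite inE.
move=> A; move Hn: #|A| => n; elim: n A Hn => [|n IH] A Hn AP.
  exists (fun _ => Ordinal N0); move/eqP: Hn; rewrite cards_eq0 => /eqP ->.
  by move=> E F; rewrite in_set0.
have : 0 < #|A| by rewrite Hn.
rewrite card_gt0 => /set0Pn [E0 E0A].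
pose E := [arg max_(X > E0 in A) key X].
have EA : E \in A by rewrite /E; case: arg_maxnP.
have Emax : forall X, X \in A -> key X <= key E.
  by rewrite /E; case: arg_maxnP => // Y _ h X XA; apply: h.
have Hn' : #|A :\ E| = n by move: (cardsD1 E A); rewrite EA Hn; case.
have [c' hc'] := IH _ Hn' (fun x xA => AP x (subsetP (subD1set A E) x xA)).
pose U := [set c' F | F in [set F in A :\ E | conf E F]].
have UN : #|U| < N.
  apply: leq_ltn_trans (leq_imset_card _ _) _.
  apply: leq_ltn_trans (hb E (AP E EA)).
  apply: subset_leq_card; apply/subsetP=> F; rewrite !inE.
  move=> /andP[/andP[FE FA] cEF]; rewrite FE cEF (AP F FA : P F) /=.
  rewrite ltn_neqAle Emax // andbT.
  apply/eqP=> h; move/eqP: FE; apply; apply: kinj => //; by apply: AP.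
have [col colU] : exists col, col \notin U.
  apply/existsP; rewrite -negb_forall; apply/negP => /forallP h.
  have : #|'I_N| <= #|U|.
    by apply: subset_leq_card; apply/subsetP=> x _; apply: h.
  by rewrite card_ord leqNgt UN.
exists (fun X => if X == E then col else c' X) => X Y XA YA XY cXY.
case: (eqVneq X E) => [XE|XE]; case: (eqVneq Y E) => [YE|YE].
- by move: XY; rewrite XE YE eqxx.
- apply/eqP => h; move/negP: colU; apply; rewrite h; apply/imsetP; exists Y => //.
  by rewrite !inE YE YA -XE.
- apply/eqP => h; move/negP: colU; apply; rewrite -h; apply/imsetP; exists X => //.
  by rewrite !inE XE XA -YE csym.
- by apply: hc' => //; rewrite in_setD1 ?XE ?YE.
Qed.

Definition ekey (V : finType) (r : V -> nat) (n : nat) (E : {set V}) : nat :=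
  (\sum_(z in E) r z - \max_(z in E) r z) * n + \max_(z in E) r z.

Lemma ekey2 (V : finType) (r : V -> nat) n (x y : V) : x != y ->
  ekey r n [set x; y] = minn (r x) (r y) * n + maxn (r x) (r y).
Proof.
move=> xy; rewrite /ekey.
have xny : x \notin [set y] by rewrite inE.
rewrite big_setU1 //= big_setU1 //= !big_set1.
congr (_ * _ + _); lia.
Qed.

Lemma lexlt (n x1 y1 x2 y2 : nat) : y1 < n -> y2 < n ->
  x1 * n + y1 < x2 * n + y2 -> x1 < x2 \/ (x1 = x2 /\ y1 < y2).
Proof.
move=> h1 h2.
case: (ltngtP x1 x2) => h; first by left.
  move=> h3; exfalso.
  have : x2.+1 * n <= x1 * n by rewrite leq_mul2r h orbT.
  rewrite mulSn; lia.
by rewrite h ltn_add2l => ?; right.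
Qed.

Lemma lexeq (n x1 y1 x2 y2 : nat) : y1 < n -> y2 < n ->
  x1 * n + y1 = x2 * n + y2 -> x1 = x2 /\ y1 = y2.
Proof.
move=> h1 h2 h.
case: (ltngtP x1 x2) => h3.
- exfalso; have : x1.+1 * n <= x2 * n by rewrite leq_mul2r h3 orbT.
  rewrite mulSn; lia.
- exfalso; have : x2.+1 * n <= x1 * n by rewrite leq_mul2r h3 orbT.
  rewrite mulSn; lia.
- by subst; split=> //; lia.
Qed.

Lemma ekey_ord (V : finType) (r : V -> nat) n (a b : V) :
  r a < r b -> ekey r n [set a; b] = r a * n + r b.
Proof.
move=> ab; have anb : a != b by apply/eqP=> h; move: ab; rewrite h ltnn.
rewrite ekey2 //; congr (_ * _ + _); lia.
Qed.

Lemma edge_norm (V : finType) (e : rel V) (r : V -> nat) (E : {set V}) :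
  symmetric e -> irreflexive e -> injective r -> is_edge e E ->
  exists u v, [/\ e u v, r u < r v & E = [set u; v]].
Proof.
move=> es ei ri /existsP[x /existsP[y /andP[exy /eqP ->]]].
have xy : x != y by apply/eqP=> h; move: exy; rewrite h ei.
have rxy : r x != r y by apply: contra xy => /eqP /ri ->.
case: (ltngtP (r x) (r y)) => h.
- by exists x, y.
- by exists y, x; rewrite es setUC.
- by move: rxy; rewrite h eqxx.
Qed.

Lemma card_bigcup_le (I T : finType) (A : {set I}) (F : I -> {set T}) :
  #|\bigcup_(i in A) F i| <= \sum_(i in A) #|F i|.
Proof.
apply: (big_rec2 (fun (X : {set T}) m => #|X| <= m)); first by rewrite cards0.
move=> i X m _ h; apply: leq_trans (leq_card_setU _ _) _; rewrite leq_add2l; exact h.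
Qed.

Lemma sum_cst_cond (T : finType) (P : pred T) c :
  \sum_(i | P i) c = #|[set i | P i]| * c.
Proof. by rewrite -sum_nat_const; apply: eq_bigl => i; rewrite inE. Qed.

Definition Tset (V : finType) (e : rel V) (r : V -> nat) (u w : V) : {set V} :=
  [set z | e w z & (r w < r u) || (r z <= r u)].
Definition Sset (V : finType) (e : rel V) (r : V -> nat) (u w : V) : {set {set V}} :=
  [set [set w; z] | z in Tset e r u w].

Lemma cover_lemma (V : finType) (e : rel V) (r : V -> nat) (n : nat) u v :
  symmetric e -> irreflexive e -> injective r -> (forall x, r x < n) ->
  e u v -> r u < r v ->
  [set F | is_edge e F && (F != [set u; v]) && conflict e [set u; v] F &&
            (ekey r n F < ekey r n [set u; v])]
  \subset (\bigcup_(w in [set w | e u w & w != v]) Sset e r u w) :|: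
          (\bigcup_(w in [set w | e v w & w != u]) Sset e r u w).
Proof.
move=> es ei ri rn euv uv.
have in1 : forall w z, e u w -> w != v -> z \in Tset e r u w -> [set w; z] \in
   (\bigcup_(w in [set w | e u w & w != v]) Sset e r u w) :|:
          (\bigcup_(w in [set w | e v w & w != u]) Sset e r u w).
  move=> w z h1 h2 h3; apply/setUP; left; apply/bigcupP; exists w.
    by rewrite inE h1 h2.
  by apply/imsetP; exists z.
have in2 : forall w z, e v w -> w != u -> z \in Tset e r u w -> [set w; z] \in
   (\bigcup_(w in [set w | e u w & w != v]) Sset e r u w) :|:
          (\bigcup_(w in [set w | e v w & w != u]) Sset e r u w).
  move=> w z h1 h2 h3; apply/setUP; right; apply/bigcupP; exists w.
    by rewrite inE h1 h2.
  by apply/imsetP; exists z.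
have neq : forall x y, r x < r y -> x != y.
  by move=> x y h; apply/eqP=> h2; move: h; rewrite h2 ltnn.
apply/subsetP => F; rewrite inE => /andP[/andP[/andP[eF FE] cF] kF].
have [a [b [eab ab EF]]] := edge_norm es ei ri eF.
move: kF FE cF; rewrite EF !ekey_ord // => kF FE cF.
case: (lexlt (rn b) (rn v) kF) => [au|[au bv]].
- have av : r a < r v by apply: ltn_trans uv.
  have Tb : a \in Tset e r u b by rewrite /Tset inE es eab (ltnW au) orbT.
  have Ta : b \in Tset e r u a by rewrite /Tset inE eab au.
  case eua: (e u a); first by apply: in1 => //; rewrite neq.
  case eva: (e v a); first by apply: in2 => //; rewrite neq.
  move/existsP: cF => [x /andP[xE /existsP[y /andP[yF hxy]]]].
  have aneu : a != u by rewrite neq.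
  have anev : a != v by rewrite neq.
  rewrite !inE in xE yF.
  case/orP: yF => /eqP ye; subst y.
    exfalso; case/orP: xE => /eqP xe; subst x; move: hxy.
      by rewrite eq_sym (negbTE aneu) eua.
    by rewrite eq_sym (negbTE anev) eva.
  rewrite (setUC [set a]).
  case/orP: xE => /eqP xe; subst x; case/orP: hxy.
  + by move/eqP=> ub; move: eab; rewrite -ub es eua.
  + move=> eub; apply: in1 => //; apply/eqP => bv; move: eab; rewrite bv es eva //.
  + by move/eqP=> vb; move: eab; rewrite -vb es eva.
  + move=> evb; apply: in2 => //; apply/eqP => bu; move: eab; rewrite bu es eua //.
- have au' : a = u by apply: ri.
  subst a; rewrite (setUC [set u]); apply: in1.
  + by [].
  + by apply/eqP => bv'; move: FE; rewrite bv' eqxx.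
  + by rewrite /Tset inE es eab leqnn orbT.
Qed.

Lemma arith (k D p1 q1 p2 q2 : nat) : 1 <= k -> k <= D -> p1 <= k -> p1 + q1 + 1 <= D ->
  p2 + 1 <= k -> p2 + q2 + 1 <= D ->
  p1 * D + q1 * k + (p2 * D + q2 * (k - 1)) <= (4 * k - 2) * D - 2 * k ^ 2.
Proof.
move=> k1 kD h1 h2 h3 h4.
have [m km] : exists m, k = m.+1 by exists k.-1; lia.
have [d Dd] : exists d, D = k + d by exists (D - k); lia.
subst k D.
have f1 : (p1 + q1 + 1) * m.+1 <= (m.+1 + d) * m.+1 by apply: leq_mul.
have f2 : p1 * d <= m.+1 * d by apply: leq_mul.
have f3 : (p2 + q2 + 1) * m <= (m.+1 + d) * m by apply: leq_mul.
have f4 : p2 * (d+1) <= m * (d+1) by apply: leq_mul; lia.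
have -> : m.+1 - 1 = m by lia.
have -> : (4 * m.+1 - 2) * (m.+1 + d) - 2 * m.+1 ^ 2 = 2*m*m + 2*m + 4*m*d + 2*d.
  rewrite -mulnn; nia.
lia.
Qed.

Lemma card_split (T : finType) (A : {set T}) (P : pred T) :
  #|[set i | (i \in A) && P i]| + #|[set i | (i \in A) && ~~ P i]| = #|A|.
Proof.
rewrite -(cardsID [set i | P i] A); congr (_ + _); apply: eq_card => i; by rewrite !inE // andbC.
Qed.

Lemma count_bound (V : finType) (e : rel V) (r : V -> nat) (n k D : nat) u v :
  symmetric e -> irreflexive e -> injective r -> (forall x, r x < n) ->
  (forall x, #|[set z | e x z & r z < r x]| <= k) ->
  (forall x, deg e x <= D) -> 1 <= k -> k <= D ->
  e u v -> r u < r v ->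
  #|[set F | is_edge e F && (F != [set u; v]) && conflict e [set u; v] F &&
            (ekey r n F < ekey r n [set u; v])]| <= (4 * k - 2) * D - 2 * k ^ 2.
Proof.
move=> es ei ri rn rd dD k1 kD euv uv.
apply: leq_trans (subset_leq_card (cover_lemma es ei ri rn euv uv)) _.
apply: leq_trans (leq_card_setU _ _) _.
apply: leq_trans (leq_add (card_bigcup_le _ _) (card_bigcup_le _ _)) _.
have hS : forall w, #|Sset e r u w| <= #|Tset e r u w| by move=> w; apply: leq_imset_card.
have e1 : \sum_(w in [set w | e u w & w != v]) #|Sset e r u w| <= \sum_(w in [set w | e u w & w != v]) #|Tset e r u w| by apply: leq_sum => w _; exact: hS.
have e2 : \sum_(w in [set w | e v w & w != u]) #|Sset e r u w| <= \sum_(w in [set w | e v w & w != u]) #|Tset e r u w| by apply: leq_sum => w _; exact: hS.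
apply: leq_trans (leq_add e1 e2) _.
set P1 := [set w | e u w & w != v]; set P2 := [set w | e v w & w != u].
rewrite [X in X + _](bigID (fun w => r w < r u)) [X in _ + X](bigID (fun w => r w < r v)) /=.
have tN : forall w, #|Tset e r u w| <= D.
  move=> w; apply: leq_trans (dD w); apply: subset_leq_card; apply/subsetP => z.
  by rewrite !inE => /andP[].
have tB : forall w, r u < r w -> #|Tset e r u w| <= #|[set z | e w z & r z < r w]|.
  move=> w uw; apply: subset_leq_card; apply/subsetP => z; rewrite !inE.
  rewrite ltnNge (ltnW uw) /= => /andP[-> zu] /=; exact: leq_ltn_trans zu uw.
have tB2 : forall w, r v < r w -> e w v -> #|Tset e r u w| < #|[set z | e w z & r z < r w]|.
  move=> w vw ewv; apply: proper_card; apply/properP; split.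
    apply/subsetP => z; rewrite !inE.
    have uw : r u < r w by apply: ltn_trans vw.
    rewrite ltnNge (ltnW uw) /= => /andP[-> zu] /=; exact: leq_ltn_trans zu uw.
  exists v; first by rewrite !inE ewv vw.
  by rewrite !inE ewv /= ltnNge (ltnW (ltn_trans uv vw)) /= -ltnNge.
have neq : forall x y, r x < r y -> x != y.
  by move=> x y h; apply/eqP=> h2; move: h; rewrite h2 ltnn.
have rne : forall x y, e x y -> r x != r y.
  move=> x y h; apply/eqP => /ri h2; move: h; rewrite h2 ei //.
have s11 : \sum_(w | (w \in P1) && (r w < r u)) #|Tset e r u w|
   <= #|[set w | (w \in P1) && (r w < r u)]| * D.
  rewrite -sum_cst_cond; apply: leq_sum => w _; exact: tN.
have s12 : \sum_(w | (w \in P1) && ~~ (r w < r u)) #|Tset e r u w|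
   <= #|[set w | (w \in P1) && ~~ (r w < r u)]| * k.
  rewrite -sum_cst_cond; apply: leq_sum => w /andP[]; rewrite !inE => /andP[euw _] h.
  apply: leq_trans (tB _ _) (rd w).
  by move: (rne _ _ euw) h; rewrite -leqNgt leq_eqVlt => /negbTE -> .
have s21 : \sum_(w | (w \in P2) && (r w < r v)) #|Tset e r u w|
   <= #|[set w | (w \in P2) && (r w < r v)]| * D.
  rewrite -sum_cst_cond; apply: leq_sum => w _; exact: tN.
have s22 : \sum_(w | (w \in P2) && ~~ (r w < r v)) #|Tset e r u w|
   <= #|[set w | (w \in P2) && ~~ (r w < r v)]| * (k - 1).
  rewrite -sum_cst_cond; apply: leq_sum => w /andP[]; rewrite !inE => /andP[evw _] h.
  have vw : r v < r w.
    by move: (rne _ _ evw) h; rewrite -leqNgt leq_eqVlt => /negbTE -> .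
  have := tB2 _ vw (etrans (es w v) evw).
  have := rd w; lia.
have c1 : #|[set w | (w \in P1) && (r w < r u)]| <= k.
  apply: leq_trans (rd u); apply: subset_leq_card; apply/subsetP => w.
  by rewrite !inE => /andP[/andP[-> _] ->].
have dP1 : #|P1| + 1 <= D.
  apply: leq_trans (dD u); rewrite /deg [X in _ <= X](cardsD1 v) inE euv /= addn1 add1n ltnS.
  apply: subset_leq_card; apply/subsetP => w; rewrite !inE => /andP[-> ->] //.
have dP2 : #|P2| + 1 <= D.
  apply: leq_trans (dD v); rewrite /deg [X in _ <= X](cardsD1 u) inE (etrans (es v u) euv) /= addn1 add1n ltnS.
  apply: subset_leq_card; apply/subsetP => w; rewrite !inE => /andP[-> ->] //.
have c3 : #|[set w | (w \in P2) && (r w < r v)]| + 1 <= k.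
  apply: leq_trans (rd v).
  have uN : u \notin [set w | (w \in P2) && (r w < r v)] by rewrite !inE eqxx andbF.
  have -> : #|[set w | (w \in P2) && (r w < r v)]| + 1 = #|u |: [set w | (w \in P2) && (r w < r v)]| by rewrite cardsU1 uN addnC.
  apply: subset_leq_card; apply/subsetP => w.
  rewrite !inE; case/orP => [/eqP -> | /andP[/andP[-> _] ->] //].
  by rewrite (etrans (es v u) euv) uv.
have := card_split P1 (fun w => r w < r u).
have := card_split P2 (fun w => r w < r v).
move: s11 s12 s21 s22 c1 dP1 dP2 c3.
set p1 := #|[set w | (w \in P1) && (r w < r u)]|.
set q1 := #|[set w | (w \in P1) && ~~ (r w < r u)]|.
set p2 := #|[set w | (w \in P2) && (r w < r v)]|.
set q2 := #|[set w | (w \in P2) && ~~ (r w < r v)]|.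
move=> s11 s12 s21 s22 c1 dP1 dP2 c3 h2 h1.
have := arith k1 kD c1 (_ : p1 + q1 + 1 <= D) c3 (_ : p2 + q2 + 1 <= D).
move=> /(_ ltac:(lia)) /(_ ltac:(lia)) => ha.
apply: leq_trans ha; apply: leq_add; apply: leq_add => //.
Qed.

Lemma conflict_sym (V : finType) (e : rel V) : symmetric e -> symmetric (conflict e).
Proof.
move=> es E F; apply/idP/idP => /existsP[x /andP[xE /existsP[y /andP[yF h]]]];
  apply/existsP; exists y; rewrite yF /=; apply/existsP; exists x;
  by rewrite xE /= eq_sym es.
Qed.

Unset Implicit Arguments.
Theorem theorem1 (V : finType) (e : rel V) (k : nat) :
  simple_graph e ->
  1 <= k ->
  degenerate e k ->
  k <= max_deg e ->
  strong_chi_le e ((4 * k - 2) * max_deg e - 2 * k ^ 2 + 1).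
Proof.
move=> [es ei] k1 dg kD.
have [r [ri0 rb0 rd0]] := order_exists es dg setT.
have ri : injective r by move=> x y h; apply: ri0 => //; rewrite inE.
set n := #|[set: V]|.
have rn : forall x, r x < n by move=> x; apply: rb0; rewrite inE.
have rd : forall x, #|[set z | e x z & r z < r x]| <= k.
  move=> x; apply: leq_trans (rd0 x _); last by rewrite inE.
  by apply: subset_leq_card; apply/subsetP => z; rewrite !inE.
have dD : forall x, deg e x <= max_deg e by move=> x; apply: leq_bigmax.
have kinj : {in is_edge e &, injective (ekey r n)}.
  move=> E F; rewrite !unfold_in => eE eF.
  have [a [b [eab ab ->]]] := edge_norm es ei ri eE.
  have [u [v [euv uv ->]]] := edge_norm es ei ri eF.
  by rewrite !ekey_ord // => /lexeq [] // /ri -> /ri ->.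
have hb : forall E, is_edge e E -> #|[set F | is_edge e F && (F != E) && conflict e E F && (ekey r n F < ekey r n E)]| < (4 * k - 2) * max_deg e - 2 * k ^ 2 + 1.
  move=> E eE.
  have [u [v [euv uv EE]]] := edge_norm es ei ri eE.
  subst E; rewrite addn1 ltnS.
  exact: (count_bound es ei ri rn rd dD k1 kD euv uv).
have [c hc] := @greedy _ (is_edge e) (conflict e) (ekey r n)
   ((4 * k - 2) * max_deg e - 2 * k ^ 2 + 1) (ltac:(by rewrite addn1)) (conflict_sym es) kinj hb.
by exists c.
Qed.
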